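(* Let $I$ be a set of players, for each $i\in I$ let $G_i$ be a compact convex subset of a Hausdorff locally convex topological vector space, and let $G=(G_i,P_i,Q_i)_{i\in I}$ be a general qualitative game satisfying property $T$, where $P_i,Q_i:\prod_{j\in I}G_j\to 2^{G_i}$ satisfy for each $i\in I$: (i) $y_i\in Q_i(y_i,x_{-i})$ for each $y_i\in G_i$ and each $x_{-i}\in G_{-i}$; (ii) $Q_i$ has convex closed values; (iii) $x_i\notin P_i(x)$ for each $x\in\prod_{j\in I}G_j$; (iv) $P_i$ is upper semicontinuous with closed convex values in $G_i$. Then: (a) if $G\to^* H$ and there exist $i\in I$ and $x_i,y_i\in G_i$ with $y_i\succ_H x_i$, then there exists $x_i^*\in H_i$ such that $x_i^*\succ_H x_i$ and $z_i\not\succ_H x_i^*$ for all $z_i\in G_i$; (b) if $M$ is a nonempty maximal $(\to^* )$-reduction of $G$, then $M$ is the unique maximal $(\to^* )$-reduction of $G$.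
   Context: $I$ is a nonempty set; $X=\prod_{j\in I}G_j$, $G_{-i}=\prod_{j\ne i}G_j$, $x=(x_i,x_{-i})$. A general qualitative game is $G=(G_i,P_i,Q_i)_{i\in I}$ with correspondences $P_i,Q_i:X\to 2^{G_i}$. It satisfies property $T$ if for each $i$ and each $x\in X$: $P_i(x)\subseteq Q_i(x)$, and $y_i\in P_i(x)$ implies $Q_i(y_i,x_{-i})\subseteq P_i(x)$. A pairing of $G$ is a family $H=(H_i)_{i\in I}$ with $H_i\subseteq G_i$ (the $P_i$ restricted to $\prod_jH_j$); $H_{-i}=\prod_{j\ne i}H_j$; $H$ is nonempty if every $H_i\neq\emptyset$. For $x_i,y_i\in G_i$: $y_i\succ_H x_i$ iff $H_{-i}\neq\emptyset$ and $y_i\in P_i(x_i,x_{-i})$ for all $x_{-i}\in H_{-i}$. For pairings $R,S$ with $S_i\subseteq R_i$ for all $i$: $R\to S$ means for every $i$ and $x_i\in R_i\setminus S_i$, $\bigcap_{x_{-i}\in R_{-i}}P_i(x_i,x_{-i})\ne\emptyset$; it is fast if moreover for every $i$ and $x_i\in R_i$, $\bigcap_{x_{-i}\in R_{-i}}P_i(x_i,x_{-i})\neq\emptyset$ implies $x_i\notin S_i$. $G\to^*H$ means there is a finite or countably infinite sequence of pairings $R^0=G,R^1,\dots$ with $R^t\to R^{t+1}$ fast for each $t$ and $H_i=\bigcap_tR^t_i$ for each $i$. $H$ is a maximal $(\to^* )$-reduction of $G$ if $G\to^*H$ and, for pairings $H'$ with $H'_i\subseteq H_i$, $H\to H'$ holds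 only for $H'=H$. *)

(* Defs.v *)
From HB Require Import structures.
From mathcomp Require Import all_boot all_order all_algebra.
From mathcomp Require Import all_classical all_reals all_analysis.
Unset Printing Implicit Defensive.
Import Order.TTheory GRing.Theory Num.Theory.
Local Open Scope classical_set_scope.

Section QualGame.
Variables (I : Type) (T : I -> Type).

(* profile update: (y_i, x_{-i}) *)
Definition upd (x : forall j, T j) (i : I) (y : T i) : forall j, T j :=
  fun j => match pselect (i = j) with
           | left e => eq_rect i T y j e
           | right _ => x j
           end.

Definition profiles (G : forall i, set (T i)) : set (forall j, T j) :=
  [set x | forall j, G j (x j)].

(* x_{-i} in H_{-i}  (the i-th coordinate of x is irrelevant) *)
Definition in_minus (H : forall i, set (T i)) (i : I) (x : forall j, T j) :=
  forall j, j <> i -> H j (x j).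

Variables (G : forall i, set (T i))
          (P : forall i, (forall j, T j) -> set (T i)).

Definition propertyT (Q : forall i, (forall j, T j) -> set (T i)) :=
  forall (i : I) (x : forall j, T j), profiles G x ->
    P i x `<=` Q i x /\
    (forall y, P i x y -> Q i (upd x i y) `<=` P i x).

Definition pairing (H : forall i, set (T i)) := forall i, H i `<=` G i.

Definition nonempty_pairing (H : forall i, set (T i)) := forall i, H i !=set0.

Definition succH (H : forall i, set (T i)) (i : I) (yi xi : T i) :=
  (exists x, in_minus H i x) /\
  (forall x, in_minus H i x -> P i (upd x i xi) yi).

Definition cap_nonempty (R : forall i, set (T i)) (i : I) (xi : T i) :=
  exists2 y, G i y & forall x, in_minus R i x -> P i (upd x i xi) y.

Definition arrow (R S : forall i, set (T i)) :=
  (forall i, S i `<=` R i) /\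
  (forall i xi, R i xi -> ~ S i xi -> cap_nonempty R i xi).

Definition fast_arrow (R S : forall i, set (T i)) :=
  arrow R S /\ (forall i xi, R i xi -> cap_nonempty R i xi -> ~ S i xi).

(* index t is in the range of a sequence of length len (None = infinite,
   Some n = R^0, ..., R^n) *)
Definition in_range (len : option nat) (t : nat) :=
  match len with None => True | Some n => is_true (t <= n)%N end.

Definition reduces_star (H : forall i, set (T i)) :=
  exists (R : nat -> forall i, set (T i)) (len : option nat),
    (forall i, R 0%N i = G i) /\
    (forall t, in_range len t.+1 -> pairing (R t) /\ fast_arrow (R t) (R t.+1)) /\
    (forall i, H i = [set y | forall t, in_range len t -> R t i y]).

Definition maximal_reduction (H : forall i, set (T i)) :=
  reduces_star H /\
  (forall H', pairing H' -> (forall i, H' i `<=` H i) -> arrow H H' ->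
     forall i, H' i = H i).

End QualGame.
Arguments upd {I T}.
Arguments profiles {I T}.
Arguments in_minus {I T}.
Arguments propertyT {I T}.
Arguments pairing {I T}.
Arguments nonempty_pairing {I T}.
Arguments succH {I T}.
Arguments cap_nonempty {I T}.
Arguments arrow {I T}.
Arguments fast_arrow {I T}.
Arguments reduces_star {I T}.
Arguments maximal_reduction {I T}.

Definition prod_nbhs {I : Type} {E : I -> topologicalType}
  (x : forall j, E j) (U : set (forall j, E j)) :=
  exists (F : set I) (V : forall j, set (E j)), finite_set F /\
    (forall j, F j -> open (V j) /\ V j (x j)) /\
    (forall y, (forall j, F j -> V j (y j)) -> U y).

(* upper semicontinuity of P_i on X = prod_j G_j (X with the product of the
   subspace topologies); since values lie in G_i, relatively open W' = W \cap G_i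
   may be replaced by ambient open W. *)
Definition usc {I : Type} {E : I -> topologicalType} (G : forall j, set (E j))
  (i : I) (F : (forall j, E j) -> set (E i)) :=
  forall x, profiles G x -> forall W : set (E i), open W -> F x `<=` W ->
    exists U, prod_nbhs x U /\ (forall y, profiles G y -> U y -> F y `<=` W).

(* Main.v *)
Require Import Defs.
From HB Require Import structures.
From mathcomp Require Import all_boot all_order all_algebra.
From mathcomp Require Import all_classical all_reals all_analysis.
Import Order.TTheory GRing.Theory Num.Theory.
Local Open Scope classical_set_scope.

Section PT.
Variables (R : realType) (E : tvsType R).
Definition pE : Type := E.
HB.instance Definition _ := Topological.on pE.
HB.instance Definition _ := isPointed.Build pE (0%R : E).
Lemma compact_fip (A : set E) : compact A -> forall (D : set E) (f : E -> set E),
  closed_fam_of A D f -> finI D f -> \bigcap_(i in D) f i !=set0.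
Proof. move=> cA D f. have := (@compact_In0 pE). move=> h. rewrite h in cA. exact: cA. Qed.
End PT.

Section Upd.
Variables (I : Type) (T : I -> Type).
Lemma upd_same (x : forall j, T j) i (y : T i) : upd x i y i = y.
Proof.
rewrite /upd; case: pselect => [e|ne]; last by exfalso.
by rewrite (Prop_irrelevance e erefl).
Qed.
Lemma upd_other (x : forall j, T j) i (y : T i) j : j <> i -> upd x i y j = x j.
Proof. by move=> nji; rewrite /upd; case: pselect => // e; exfalso; apply: nji. Qed.
Lemma upd_upd (x : forall j, T j) i (a b : T i) : upd (upd x i a) i b = upd x i b.
Proof. apply: functional_extensionality_dep => j; rewrite /upd; by case: pselect. Qed.
Lemma inm_mono (H K : forall i, set (T i)) i x :
  (forall j, H j `<=` K j) -> in_minus H i x -> in_minus K i x.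
Proof. by move=> HK hx j nj; apply: HK; apply: hx. Qed.
End Upd.
Section Main.
Variables (R : realType) (I : Type) (E : I -> tvsType R)
  (G : forall i, set (E i))
  (P Q : forall i, (forall j, E j) -> set (E i)).
Hypothesis HPG : forall i x, profiles G x -> P i x `<=` G i /\ Q i x `<=` G i.
Hypothesis HT : propertyT G P Q.
Hypothesis Hiii : forall i x, profiles G x -> ~ P i x (x i).
Hypothesis Hcl : forall i x, profiles G x -> closed (P i x).
Hypothesis Hcomp : forall i, compact (G i).
Hypothesis Hhaus : forall i, hausdorff_space (E i).

Definition Sc (H : forall i, set (E i)) i (c : E i) :=
  \bigcap_(x in in_minus H i) P i (upd x i c).

Lemma prof_upd (H : forall i, set (E i)) i x y : (forall j, H j `<=` G j) ->
  in_minus H i x -> G i y -> profiles G (upd x i y).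
Proof.
move=> HG hx gy j; case: (pselect (i = j)) => [e|ne].
  by subst j; rewrite upd_same.
rewrite upd_other; last by move=> /esym.
by apply: HG; apply: hx => /esym.
Qed.
Arguments prof_upd {H i x y}.

Lemma irr H i x a : (forall j, H j `<=` G j) -> in_minus H i x -> G i a ->
  ~ P i (upd x i a) a.
Proof.
move=> HG hx ga; have := Hiii i _ (prof_upd HG hx ga); by rewrite upd_same.
Qed.

Lemma Sc_trans H i a b c : (forall j, H j `<=` G j) -> G i a -> G i b ->
  Sc H i a b -> Sc H i b c -> Sc H i a c.
Proof.
move=> HG ga gb hab hbc x hx.
have [_ h2] := HT i _ (prof_upd HG hx ga).
apply: (h2 b (hab x hx)); rewrite upd_upd.
have [h1 _] := HT i _ (prof_upd HG hx gb); exact: h1 (hbc x hx).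
Qed.

Lemma Sc_closed H i c : (forall j, H j `<=` G j) -> G i c -> closed (Sc H i c).
Proof. move=> HG gc; apply: closed_bigI => x hx; exact: Hcl i _ (prof_upd HG hx gc). Qed.

Lemma in_range0 len : in_range len 0.
Proof. by case: len. Qed.

Lemma in_range_pred len t : in_range len t.+1 -> in_range len t.
Proof. case: len => //= n; exact: ltnW. Qed.
Arguments in_range_pred {len t}.

Lemma rs_sub H : reduces_star G P H -> forall j, H j `<=` G j.
Proof.
case=> Rs [len [h0 [_ hH]]] j z; rewrite hH => /(_ 0%N (in_range0 len)).
by rewrite h0.
Qed.
Arguments rs_sub {H}.

Lemma rs_includes H K : reduces_star G P H -> (forall j, K j `<=` G j) ->
  (forall i xi, K i xi -> ~ cap_nonempty G P K i xi) -> forall j, K j `<=` H j.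
Proof.
case=> Rs [len [h0 [hst hH]]] KG und j z Kz; rewrite hH => t.
elim: t j z Kz => [|t IH] j z Kz ht; first by rewrite h0; exact: KG.
have [_ [[sub arr] fast]] := hst t ht.
apply: contrapT => nz; apply: (und j z Kz).
have [y gy hy] := arr j z (IH j z Kz (in_range_pred ht)) nz.
exists y => // x hx; apply: hy => k nk.
exact: IH (hx k nk) (in_range_pred ht).
Qed.
Arguments rs_includes {H K}.

Lemma maximal_undom K : maximal_reduction G P K ->
  forall i xi, K i xi -> ~ cap_nonempty G P K i xi.
Proof.
case=> rs mx i xi Kxi cn.
pose K' := fun j z => K j z /\ (forall e : i = j, z <> eq_rect i E xi j e).
have HKG := rs_sub rs.
have : K' i = K i.
  apply: (mx K') => //.
  - by move=> j z [kz _]; exact: HKG.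
  - by move=> j z [].
  split; first by move=> j z [].
  move=> j z Kz nK'.
  case: (pselect (exists e : i = j, z = eq_rect i E xi j e)) => [[e ze]|ne].
    by subst j; rewrite ze.
  by exfalso; apply: nK'; split => // e ze; apply: ne; exists e.
move=> eq; have : K' i xi by rewrite eq.
by case=> _ /(_ erefl).
Qed.

Lemma partb M M' : maximal_reduction G P M -> maximal_reduction G P M' ->
  forall i, M' i = M i.
Proof.
move=> hM hM' i; apply/seteqP; split.
  apply: (rs_includes hM.1) => //; first exact: rs_sub hM'.1.
  exact: maximal_undom.
apply: (rs_includes hM'.1) => //; first exact: rs_sub hM.1.
exact: maximal_undom.
Qed.

Arguments irr {H i x a}.
Arguments Sc_trans {H i a b c}.
Arguments Sc_closed {H i c}.
Section PartA.
Variables (H : forall i, set (E i)) (rs : reduces_star G P H)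
  (i : I) (xi yi : E i) (gxi : G i xi) (gyi : G i yi)
  (x0 : forall j, E j) (hx0 : in_minus H i x0) (hs : Sc H i xi yi).

Let HG := rs_sub rs.
Let S' (z : E i) := G i z /\ Sc H i xi z.
Let T := {z : E i | S' z}.
Let r (a b : T) : bool := `[< sval a = sval b \/ Sc H i (sval a) (sval b) >].

Let Gv (a : T) : G i (sval a). Proof. exact: (proj2_sig a).1. Qed.
Let Sv (a : T) : Sc H i xi (sval a). Proof. exact: (proj2_sig a).2. Qed.

Let r_refl : forall t, r t t.
Proof. by move=> t; apply/asboolP; left. Qed.

Let r_trans : forall a b c, r a b -> r b c -> r a c.
Proof.
move=> a b c /asboolP hab /asboolP hbc; apply/asboolP.
case: hab => [e|h]; first by rewrite e.
case: hbc => [e'|h']; first by right; rewrite -e'.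
right; exact: Sc_trans HG (Gv a) (Gv b) h h'.
Qed.

Let r_anti : forall a b, r a b -> r b a -> a = b.
Proof.
case=> a pa [b pb] /asboolP /= hab /asboolP /= hba.
have ab : a = b.
  case: hab => // h; case: hba => [->//|h'].
  exfalso; apply: (irr HG hx0 (Gv (exist _ a pa))).
  exact: (Sc_trans HG (Gv (exist _ a pa)) (Gv (exist _ b pb)) h h') x0 hx0.
subst b; by rewrite (Prop_irrelevance pa pb).
Qed.

Let chain_max (A : set T) (a0 : T) : A a0 -> total_on A r ->
  forall s : seq (E i), (forall c, c \in s -> exists2 b, A b & sval b = c) ->
  exists2 a, A a & forall c, c \in s -> sval a = c \/ Sc H i c (sval a).
Proof.
move=> Aa0 tot; elim=> [|c s IH] hs'; first by exists a0.
have [a Aa ha] : exists2 a, A a & forall c, c \in s -> sval a = c \/ Sc H i c (sval a).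
  by apply: IH => c' cs; apply: hs'; rewrite inE cs orbT.
have [b Ab bc] := hs' c (mem_head _ _).
case: (tot a b Aa Ab) => /asboolP hr.
- exists b => // c'; rewrite inE => /orP [/eqP ->|cs]; first by left.
  have [b' _ eb'] : exists2 b', A b' & sval b' = c' by apply: hs'; rewrite inE cs orbT.
  case: (ha c' cs) => [e|h]; case: hr => [e'|h'].
  + by left; rewrite -e' e.
  + by right; rewrite -e.
  + by right; rewrite -e'.
  + right; apply: (Sc_trans HG _ (Gv a) h h'); rewrite -eb'; exact: Gv.
- exists a => // c'; rewrite inE => /orP [/eqP ->|cs]; last exact: ha.
  by rewrite -bc; case: hr => [->|h]; [left|right].
Qed.

Let Sx : S' yi. Proof. by split. Qed.

Let bound : forall A : set T, total_on A r -> exists t, forall s, A s -> r s t.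
Proof.
move=> A tot.
case: (pselect (exists a, A a)) => [[a0 Aa0]|nA]; last first.
  by exists (exist _ yi Sx) => s As; exfalso; apply: nA; exists s.
pose D := [set c | exists2 b, A b & sval b = c].
pose g := fun c : E i => Sc H i xi `&` (Sc H i c `|` [set c]).
pose f := fun c : E i => G i `&` g c.
have [p hp] : \bigcap_(c in D) f c !=set0.
  apply: (@compact_fip R (E i) (G i) (Hcomp i)).
    exists g => // c [b _ <-]; apply: closedI; first exact: Sc_closed HG gxi.
    apply: closedU; first exact: Sc_closed HG (Gv b).
    exact/accessible_closed_set1/hausdorff_accessible.
  move=> D' sub.
  have [a Aa ha] := chain_max A a0 Aa0 tot (finmap.enum_fset D')
     (fun c cD => (set_mem (sub c cD))).
  exists (sval a) => c /= cD; split; first exact: Gv.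
  split; first exact: Sv.
  by case: (ha c cD) => [->|h]; [right|left].
have [Gp [Sp _]] := hp _ (ex_intro2 _ _ a0 Aa0 erefl).
have pp : S' p by [].
exists (exist _ p pp) => s As; apply/asboolP.
have [_ [_ h]] := hp _ (ex_intro2 _ _ s As erefl).
by case: h => [h|e]; [right|left; rewrite /= e].
Qed.

Lemma parta_main : exists xs, H i xs /\ Sc H i xi xs /\
  (forall z, G i z -> ~ Sc H i xs z).
Proof.
have [t ht] := Zorn r_refl r_trans r_anti bound.
have nodom : forall z, G i z -> ~ Sc H i (sval t) z.
  move=> z gz hz.
  have pz : S' z by split=> //; exact: Sc_trans HG gxi (Gv t) (Sv t) hz.
  have e := ht (exist _ z pz) (introT (asboolP _) (or_intror hz)).
  have ez : z = sval t by rewrite -e.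
  rewrite ez in hz.
  exact: irr HG hx0 (Gv t) (hz x0 hx0).
exists (sval t); split; last by split => //; exact: Sv.
have [Rs [len [h0 [hst hH]]]] := rs.
rewrite hH => n.
elim: n => [|n IH] hn; first by rewrite h0; exact: Gv.
have [_ [[_ arr] _]] := hst n hn.
apply: contrapT => nz.
have [y gy hy] := arr i _ (IH (in_range_pred hn)) nz.
apply: (nodom y gy) => x hx; apply: hy => k nk.
have := hx k nk; rewrite hH; apply; exact: in_range_pred hn.
Qed.
End PartA.
End Main.
Theorem corollary1 (R : realType) (I : Type) (E : I -> tvsType R)
  (G : forall i, set (E i))
  (P Q : forall i, (forall j, E j) -> set (E i)) :
  inhabited I ->
  (forall i, hausdorff_space (E i)) ->
  (forall i, compact (G i)) ->
  (forall i, convex_set (G i : set (convex_lmodType (E i)))) ->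
  (* P_i, Q_i : X -> 2^{G_i} *)
  (forall i x, profiles G x -> P i x `<=` G i /\ Q i x `<=` G i) ->
  propertyT G P Q ->
  (* (i) *)
  (forall i x yi, profiles G x -> G i yi -> Q i (upd x i yi) yi) ->
  (* (ii) *)
  (forall i x, profiles G x ->
     convex_set (Q i x : set (convex_lmodType (E i))) /\ closed (Q i x)) ->
  (* (iii) *)
  (forall i x, profiles G x -> ~ P i x (x i)) ->
  (* (iv) *)
  (forall i, usc G i (P i)) ->
  (forall i x, profiles G x ->
     closed (P i x) /\ convex_set (P i x : set (convex_lmodType (E i)))) ->
  (* (a) *)
  (forall H, reduces_star G P H ->
     forall i xi yi, G i xi -> G i yi -> succH P H i yi xi ->
     exists xs, H i xs /\ succH P H i xs xi /\
       (forall zi, G i zi -> ~ succH P H i zi xs)) /\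
  (* (b) *)
  (forall M, nonempty_pairing M -> maximal_reduction G P M ->
     forall M', maximal_reduction G P M' -> forall i, M' i = M i).
Proof.
move=> _ Hh Hc _ HPG HT _ _ Hiii _ Hcl'.
have Hcl : forall i x, profiles G x -> closed (P i x).
  by move=> i x px; exact: (Hcl' i x px).1.
split.
- move=> H rs i xi yi gxi gyi [[x0 hx0] hs].
  have [xs [h1 [h2 h3]]] :=
    @parta_main _ _ _ _ _ Q HT Hiii Hcl Hc Hh _ rs _ _ _ gxi gyi _ hx0 hs.
  exists xs; split=> //; split; first by split; [exists x0|].
  by move=> z gz [_ h]; exact: h3 z gz h.
- move=> M _ hM M' hM' i; exact: (@partb _ _ _ _ _ _ _ hM hM').
Qed.
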